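(* Let $w\in W$ and $\gamma\in\mathrm{maxinv}(w)$. Then $w\to s_\gamma w$ is a quantum edge of $\mathrm{QB}(W)$; that is, writing $s_\gamma w=ws_{\beta}$ with $\beta=-w^{-1}\gamma\in\Phi^+$, we have $\ell(ws_\beta)=\ell(w)+1-\langle\beta^\vee,2\rho\rangle$.
   Context: $\Phi$ is a reduced crystallographic finite root system with fixed basis $\Delta$, positive roots $\Phi^+$, negative roots $\Phi^-=-\Phi^+$, Weyl group $W$ with Coxeter length $\ell$, and $2\rho=\sum_{\beta\in\Phi^+}\beta$. For roots $\gamma,\alpha$ write $\gamma\le\alpha$ if $\alpha-\gamma$ is a $\mathbb Z_{\ge0}$-combination of positive roots. For $w\in W$: $\mathrm{inv}(w)=\{\alpha\in\Phi^+:w^{-1}\alpha\in\Phi^-\}$, and $\gamma\in\mathrm{inv}(w)$ is a maximal inversion, $\gamma\in\mathrm{maxinv}(w)$, if there is no $\alpha\in\mathrm{inv}(w)$ with $\alpha\ne\gamma$ and $\gamma\le\alpha$. The quantum Bruhat graph $\mathrm{QB}(W)$ has vertex set $W$ and an edge $u\to us_\beta$ ($\beta\in\Phi^+$) if $\ell(us_\beta)=\ell(u)+1$ (Bruhat edge) or $\ell(us_\beta)=\ell(u)+1-\langle\beta^\vee,2\rho\rangle$ (quantum edge). *)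

(* Defs.v *)
From HB Require Import structures.
From mathcomp Require Import all_boot all_order all_algebra.
From mathcomp Require Import boolp.
Set Implicit Arguments. Unset Strict Implicit. Unset Printing Implicit Defensive.
Import Order.TTheory GRing.Theory Num.Theory.
Local Open Scope ring_scope.

Section RootSystems.
Variables (R : realFieldType) (n : nat).
Notation V := 'cV[R]_n.

Definition dot (u v : V) : R := (u^T *m v) 0 0.

(* reflection s_a as a matrix: s_a v = v - (2 (v,a)/(a,a)) a *)
Definition refl (a : V) : 'M[R]_n :=
  1%:M - (2 / dot a a) *: (a *m a^T).

(* <b, a^vee> = 2 (b,a)/(a,a) *)
Definition cartan (b a : V) : R := 2 * dot b a / dot a a.

Definition is_root_system (Phi : seq V) : Prop :=
  [/\ uniq Phi /\ (0 : V) \notin Phi,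
      (forall a, a \in Phi -> - a \in Phi),
      (forall a (c : R), a \in Phi -> c *: a \in Phi -> c = 1 \/ c = -1),
      (forall a b, a \in Phi -> b \in Phi -> refl a *m b \in Phi) &
      (forall a b, a \in Phi -> b \in Phi -> exists z : int, cartan b a = z%:~R)].

Definition positive (Phi Delta : seq V) (b : V) : Prop :=
  b \in Phi /\ exists c : 'I_(size Delta) -> nat,
      b = \sum_(i < size Delta) (c i)%:R *: Delta`_i.

Definition negative (Phi Delta : seq V) (b : V) : Prop := positive Phi Delta (- b).

Definition is_basis (Phi Delta : seq V) : Prop :=
  [/\ {subset Delta <= Phi},
      (forall c : 'I_(size Delta) -> R,
          \sum_(i < size Delta) c i *: Delta`_i = 0 -> forall i, c i = 0) &
      (forall b, b \in Phi -> positive Phi Delta b \/ negative Phi Delta b)].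

Definition in_W (Phi : seq V) (w : 'M[R]_n) : Prop :=
  exists s : seq V, {subset s <= Phi} /\ w = foldr (fun a m => refl a *m m) 1%:M s.

Definition word_prod (Delta : seq V) (s : seq 'I_(size Delta)) : 'M[R]_n :=
  foldr (fun (i : 'I_(size Delta)) m => refl Delta`_i *m m) 1%:M s.

Definition length_is (Delta : seq V) (w : 'M[R]_n) (k : nat) : Prop :=
  (exists s : seq 'I_(size Delta), size s = k /\ word_prod s = w) /\
  (forall s : seq 'I_(size Delta), word_prod s = w -> (k <= size s)%N).

Definition two_rho (Phi Delta : seq V) : V :=
  \sum_(b <- Phi | `[< positive Phi Delta b >]) b.

Definition root_le (Phi Delta : seq V) (g a : V) : Prop :=
  exists s : seq V, (forall b, b \in s -> positive Phi Delta b) /\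
                    a - g = \sum_(b <- s) b.

Definition inv_set (Phi Delta : seq V) (w : 'M[R]_n) (a : V) : Prop :=
  positive Phi Delta a /\ negative Phi Delta (invmx w *m a).

Definition maxinv (Phi Delta : seq V) (w : 'M[R]_n) (g : V) : Prop :=
  inv_set Phi Delta w g /\
  ~ exists a, [/\ inv_set Phi Delta w a, a <> g & root_le Phi Delta g a].

End RootSystems.

(* Main.v *)
Require Import Defs.
From HB Require Import structures.
From mathcomp Require Import all_boot all_order all_algebra.
From mathcomp Require Import boolp.
From mathcomp Require Import ring lra.
From mathcomp Require Import zify.
From Stdlib Require Import Lia.
Import Order.TTheory GRing.Theory Num.Theory.
Local Open Scope ring_scope.

Set Implicit Arguments. Unset Strict Implicit. Unset Printing Implicit Defensive.
Section LinAlg.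
Variables (R : realFieldType) (n : nat).
Notation V := 'cV[R]_n.
Notation M := 'M[R]_n.
Implicit Types (u v a : V) (A B : M).

Lemma mx_ext A B : (forall v : V, A *m v = B *m v) -> A = B.
Proof.
move=> H; apply/matrixP=> i j.
have := congr1 (fun X : V => X i 0) (H (delta_mx j 0)).
by rewrite -!colE !mxE.
Qed.

Lemma dotC u v : dot u v = dot v u.
Proof.
rewrite /dot -[in RHS](trmxK u) -trmx_mul.
by rewrite [in RHS]mxE.
Qed.

Lemma dotDl u v a : dot (u + v) a = dot u a + dot v a.
Proof. by rewrite /dot linearD /= mulmxDl mxE. Qed.

Lemma dotNl u a : dot (- u) a = - dot u a.
Proof. by rewrite /dot linearN /= mulNmx mxE. Qed.

Lemma dotBl u v a : dot (u - v) a = dot u a - dot v a.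
Proof. by rewrite dotDl dotNl. Qed.

Lemma dotZl (c : R) u a : dot (c *: u) a = c * dot u a.
Proof. by rewrite /dot linearZ /= -scalemxAl mxE. Qed.

Lemma dot0l a : dot 0 a = 0.
Proof. by rewrite /dot linear0 mul0mx mxE. Qed.

Lemma dotDr u v a : dot a (u + v) = dot a u + dot a v.
Proof. by rewrite !(dotC a) dotDl. Qed.
Lemma dotNr u a : dot a (- u) = - dot a u.
Proof. by rewrite !(dotC a) dotNl. Qed.
Lemma dotZr (c : R) u a : dot a (c *: u) = c * dot a u.
Proof. by rewrite !(dotC a) dotZl. Qed.

Lemma dot_suml (I : Type) (r : seq I) (P : pred I) (F : I -> V) a :
  dot (\sum_(i <- r | P i) F i) a = \sum_(i <- r | P i) dot (F i) a.
Proof.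
elim: r => [|x r IH]; first by rewrite !big_nil dot0l.
rewrite !big_cons; case: (P x) => //.
by rewrite dotDl IH.
Qed.

Lemma dotMl A u v : dot (A *m u) v = dot u (A^T *m v).
Proof. by rewrite /dot trmx_mul mulmxA. Qed.

Lemma dot_self v : dot v v = \sum_i (v i 0) ^+ 2.
Proof. by rewrite /dot mxE; apply: eq_bigr => i _; rewrite mxE expr2. Qed.

Lemma dot_ge0 v : 0 <= dot v v.
Proof. by rewrite dot_self sumr_ge0 // => i _; rewrite sqr_ge0. Qed.

Lemma dot_eq0 v : (dot v v == 0) = (v == 0).
Proof.
apply/idP/idP; last by move/eqP->; rewrite dot0l.
rewrite dot_self => /eqP H; apply/eqP/matrixP=> i j.
rewrite (ord1 j) mxE; apply/eqP; rewrite -sqrf_eq0; apply/eqP.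
by apply: (psumr_eq0P _ H) => // k _; rewrite sqr_ge0.
Qed.

Lemma dot_gt0 v : v != 0 -> 0 < dot v v.
Proof. by move=> Hv; rewrite lt_def dot_eq0 Hv dot_ge0. Qed.

Lemma cartan_lin u v a (c : R) :
  cartan (u + c *: v) a = cartan u a + c * cartan v a.
Proof. by rewrite /cartan dotDl dotZl; ring. Qed.

Lemma reflE a v : refl a *m v = v - cartan v a *: a.
Proof.
rewrite /refl mulmxBl mul1mx -scalemxAl -mulmxA.
rewrite [a^T *m v]mx11_scalar mul_mx_scalar scalerA.
congr (_ - _ *: _); rewrite /cartan -/(dot a v) dotC.
by rewrite mulrAC.
Qed.


Lemma cartanE u a : cartan u a = 2 * dot u a / dot a a.
Proof. by []. Qed.

Lemma cartan_self a : a != 0 -> cartan a a = 2.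
Proof. move=> Ha; have := dot_gt0 Ha; rewrite /cartan => H; field; lra. Qed.

Lemma cartanBl u v a : cartan (u - v) a = cartan u a - cartan v a.
Proof. by rewrite /cartan dotBl; ring. Qed.

Lemma cartanZl (c : R) u a : cartan (c *: u) a = c * cartan u a.
Proof. by rewrite /cartan dotZl; ring. Qed.

Lemma cartanNr u a : cartan u (- a) = - cartan u a.
Proof. by rewrite /cartan dotNr dotNl dotNr opprK; ring. Qed.

Lemma refl_self a : a != 0 -> refl a *m a = - a.
Proof. by move=> Ha; rewrite reflE cartan_self // scaler_nat mulr2n opprD addrA subrr sub0r. Qed.

Lemma reflKv a v : a != 0 -> refl a *m (refl a *m v) = v.
Proof.
move=> Ha; rewrite [refl a *m v]reflE reflE cartanBl cartanZl cartan_self //.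
rewrite -addrA -opprD -scalerDl.
have -> : cartan v a + (cartan v a - cartan v a * 2) = 0 by ring.
by rewrite scale0r subr0.
Qed.

Lemma reflK a : a != 0 -> refl a *m refl a = 1%:M.
Proof. by move=> Ha; apply: mx_ext => v; rewrite -mulmxA reflKv // mul1mx. Qed.

Lemma refl_tr a : (refl a)^T = refl a.
Proof. by rewrite /refl linearB /= linearZ /= trmx1 trmx_mul trmxK. Qed.

Lemma reflN a : refl (- a) = refl a.
Proof.
apply: mx_ext => v; rewrite !reflE cartanNr.
by rewrite scaleNr scalerN opprK.
Qed.

Definition orth (A : M) := A^T *m A = 1%:M.

Lemma orthC A : orth A -> A *m A^T = 1%:M.
Proof. exact: mulmx1C. Qed.

Lemma orth_dot A u v : orth A -> dot (A *m u) (A *m v) = dot u v.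
Proof. by move=> HA; rewrite dotMl mulmxA HA mul1mx. Qed.

Lemma orth_inj A u v : orth A -> A *m u = A *m v -> u = v.
Proof. by move=> HA H; rewrite -[u]mul1mx -HA -mulmxA H mulmxA HA mul1mx. Qed.

Lemma refl_conj A a : orth A -> A *m refl a *m A^T = refl (A *m a).
Proof.
move=> HA; apply: mx_ext => v.
rewrite -!mulmxA reflE mulmxBr mulmxA orthC // mul1mx -scalemxAr reflE.
congr (_ - _ *: _).
by rewrite /cartan dotMl trmxK -(orth_dot a a HA).
Qed.

Lemma orth_mul A B : orth A -> orth B -> orth (A *m B).
Proof. by rewrite /orth trmx_mul => HA HB; rewrite mulmxA -(mulmxA B^T) HA mulmx1 HB. Qed.

Lemma orth_tr A : orth A -> orth A^T.
Proof. by move=> HA; rewrite /orth trmxK orthC. Qed.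

Lemma refl_orth a : a != 0 -> orth (refl a).
Proof. by move=> Ha; rewrite /orth refl_tr reflK. Qed.

Lemma orth_invmx A : orth A -> invmx A = A^T.
Proof.
move=> HA; have HU : A \in unitmx.
  by case: (mulmx1_unit (orthC HA)).
by rewrite -[invmx A]mul1mx -HA -mulmxA mulmxV // mulmx1.
Qed.

End LinAlg.

Section Roots.
Variables (R : realFieldType) (n : nat) (Phi Delta : seq 'cV[R]_n).
Hypothesis HR : is_root_system Phi.
Hypothesis HB : is_basis Phi Delta.
Notation V := 'cV[R]_n.
Notation M := 'M[R]_n.
Notation I := 'I_(size Delta).
Notation pos := (positive Phi Delta).
Notation neg := (negative Phi Delta).
Notation D i := (Delta`_i).

Lemma Phi_uniq : uniq Phi. Proof. by move: HR => [[U Z] _ _ _ _]. Qed.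
Lemma Phi_0 : (0 : V) \notin Phi. Proof. by move: HR => [[U Z] _ _ _ _]. Qed.
Lemma Phi_N a : a \in Phi -> - a \in Phi. Proof. by move: HR => [_ H _ _ _]; apply: H. Qed.
Lemma Phi_red a (c : R) : a \in Phi -> c *: a \in Phi -> c = 1 \/ c = -1.
Proof. by move: HR => [_ _ H _ _]; apply: H. Qed.
Lemma Phi_refl a b : a \in Phi -> b \in Phi -> refl a *m b \in Phi.
Proof. by move: HR => [_ _ _ H _]; apply: H. Qed.
Lemma Phi_int a b : a \in Phi -> b \in Phi -> exists z : int, cartan b a = z%:~R.
Proof. by move: HR => [_ _ _ _ H]; apply: H. Qed.
Lemma Phi_neq0 a : a \in Phi -> a != 0.
Proof. by move=> Ha; apply: contraNneq Phi_0 => <-. Qed.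

Lemma D_in (i : I) : D i \in Phi.
Proof. by move: HB => [H _ _]; apply: H; rewrite mem_nth. Qed.
Lemma D_indep (c : I -> R) : \sum_i c i *: D i = 0 -> forall i, c i = 0.
Proof. by move: HB => [_ H _]; apply: H. Qed.
Lemma pos_or_neg a : a \in Phi -> pos a \/ neg a.
Proof. by move: HB => [_ _ H]; apply: H. Qed.

Lemma coord_uniq (c d : I -> R) :
  \sum_i c i *: D i = \sum_i d i *: D i -> forall i, c i = d i.
Proof.
move=> H i; apply/eqP; rewrite -subr_eq0; apply/eqP; move: i.
apply: D_indep; rewrite (eq_bigr (fun i => c i *: D i - d i *: D i)).
  by rewrite sumrB H subrr.
by move=> i _; rewrite scalerBl.
Qed.

Lemma sum_delta (i : I) (x : R) :
  \sum_j (if j == i then x else 0) *: D j = x *: D i.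
Proof.
rewrite (bigD1 i) //= eqxx big1 ?addr0 // => j /negbTE ->.
by rewrite scale0r.
Qed.

Definition pc (v : V) := exists c : I -> R,
  (forall i, 0 <= c i) /\ v = \sum_i c i *: D i.

Lemma pc0 : pc 0.
Proof. by exists (fun _ => 0); split => // ; rewrite big1 // => i _; rewrite scale0r. Qed.

Lemma pcD u v : pc u -> pc v -> pc (u + v).
Proof.
move=> [c [Hc ->]] [d [Hd ->]]; exists (fun i => c i + d i); split.
  by move=> i; rewrite addr_ge0.
by rewrite -big_split; apply: eq_bigr => i _; rewrite scalerDl.
Qed.

Lemma pcZ (x : R) v : 0 <= x -> pc v -> pc (x *: v).
Proof.
move=> Hx [c [Hc ->]]; exists (fun i => x * c i); split.
  by move=> i; rewrite mulr_ge0.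
by rewrite scaler_sumr; apply: eq_bigr => i _; rewrite scalerA.
Qed.

Lemma pc_pos a : pos a -> pc a.
Proof.
move=> [_ [c ->]]; exists (fun i => (c i)%:R); split => // i; exact: ler0n.
Qed.

Lemma pc_anti v : pc v -> pc (- v) -> v = 0.
Proof.
move=> [c [Hc Ev]] [d [Hd Ed]].
have H : \sum_i (c i + d i) *: D i = 0.
  rewrite (eq_bigr (fun i => c i *: D i + d i *: D i)).
    by rewrite big_split /= -Ev -Ed subrr.
  by move=> i _; rewrite scalerDl.
rewrite Ev big1 // => i _.
have := D_indep H i => /eqP; rewrite paddr_eq0 // => /andP [/eqP -> _].
by rewrite scale0r.
Qed.

Lemma pos_in a : pos a -> a \in Phi. Proof. by case. Qed.
Lemma neg_in a : neg a -> a \in Phi.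
Proof. by move/pos_in/Phi_N; rewrite opprK. Qed.

Lemma pos_neg a : pos a -> neg a -> False.
Proof.
move=> Hp Hn; have := pc_anti (pc_pos Hp) (pc_pos Hn).
by move=> E; move: (Phi_neq0 (pos_in Hp)); rewrite E eqxx.
Qed.

Lemma pc_root a : a \in Phi -> pc a -> pos a.
Proof.
move=> Ha Hc; case: (pos_or_neg Ha) => // Hn.
by move: (Phi_neq0 Ha); rewrite (pc_anti Hc (pc_pos Hn)) eqxx.
Qed.

Lemma pc_root_neg a : a \in Phi -> pc (- a) -> neg a.
Proof. by move=> Ha Hc; apply: pc_root => //; apply: Phi_N. Qed.

Lemma D_pos (i : I) : pos (D i).
Proof.
split; first exact: D_in.
exists (fun j => (j == i : nat)); rewrite -[LHS]scale1r -(sum_delta i 1).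
by apply: eq_bigr => j _; case: (j == i).
Qed.

Lemma negN a : neg (- a) <-> pos a.
Proof. by rewrite /negative opprK. Qed.

Definition sr (i : I) : M := refl (D i).

Lemma simple_pos (i : I) a : pos a -> a != D i -> pos (sr i *m a).
Proof.
move=> Hp Hne; have Ha := pos_in Hp.
have Hin : sr i *m a \in Phi by apply: Phi_refl => //; apply: D_in.
case: (pos_or_neg Hin) => // -[_ [d Ed]].
case: Hp => _ [c Ec]; exfalso; move: Hne => /eqP; apply.
set k := cartan a (D i).
have E : \sum_j ((c j)%:R + (d j)%:R) *: D j =
         \sum_j (if j == i then k else 0) *: D j.
  rewrite sum_delta (eq_bigr (fun j => (c j)%:R *: D j + (d j)%:R *: D j));
    last by move=> j _; rewrite scalerDl.
  by rewrite big_split /= -Ec -Ed /sr reflE opprB addrCA subrr addr0.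
have Hc0 : forall j, j != i -> c j = 0%N.
  move=> j Hj; have := coord_uniq E j; rewrite (negbTE Hj) => /eqP.
  by rewrite -natrD pnatr_eq0 addn_eq0 => /andP [/eqP].
have Ea : a = (c i)%:R *: D i.
  rewrite Ec (bigD1 i) //= big1 ?addr0 // => j Hj.
  by rewrite Hc0 // scale0r.
have : ((c i)%:R : R) = 1 \/ (c i)%:R = -1 :> R.
  by apply: Phi_red; [apply: D_in | move: Ha; rewrite {1}Ea].
case=> [H1|H1]; first by rewrite Ea H1 scale1r.
have H0 : (0 : R) <= (c i)%:R by rewrite ler0n.
by rewrite H1 oppr_ge0 ler10 in H0.
Qed.

Lemma simple_neg (i : I) a : neg a -> a != - D i -> neg (sr i *m a).
Proof.
move=> Hn Hne; rewrite /negative -mulmxN; apply: simple_pos => //.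
by apply: contra Hne => /eqP <-; rewrite opprK.
Qed.

Lemma simple_inv (i : I) a : pos a -> neg (sr i *m a) -> a = D i.
Proof.
move=> Hp Hn; apply/eqP; apply/negPn/negP => Hne.
exact: pos_neg (simple_pos Hp Hne) Hn.
Qed.


Notation wp := (@word_prod _ _ Delta).

Lemma D_neq0 (i : I) : D i != 0. Proof. exact: Phi_neq0 (D_in i). Qed.

Lemma wp_cons i s : wp (i :: s) = sr i *m wp s. Proof. by []. Qed.
Lemma wp_nil : wp [::] = 1%:M. Proof. by []. Qed.

Lemma wp_cat s1 s2 : wp (s1 ++ s2) = wp s1 *m wp s2.
Proof.
elim: s1 => [|i s1 IH] /=; first by rewrite mul1mx.
by rewrite IH mulmxA.
Qed.

Lemma wp_rcons s i : wp (rcons s i) = wp s *m sr i.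
Proof. by rewrite -cats1 wp_cat /= mulmx1. Qed.

Lemma sr_K i : sr i *m sr i = 1%:M. Proof. exact: reflK (D_neq0 i). Qed.
Lemma sr_tr i : (sr i)^T = sr i. Proof. exact: refl_tr. Qed.
Lemma sr_orth i : orth (sr i). Proof. exact: refl_orth (D_neq0 i). Qed.

Lemma wp_tr s : (wp s)^T = wp (rev s).
Proof.
elim: s => [|i s IH]; first by rewrite trmx1.
by rewrite wp_cons trmx_mul IH sr_tr rev_cons wp_rcons.
Qed.

Lemma wp_orth s : orth (wp s).
Proof.
elim: s => [|i s IH]; first by rewrite /orth trmx1 mulmx1.
by rewrite wp_cons; apply: orth_mul => //; apply: sr_orth.
Qed.

Lemma wp_Phi s a : a \in Phi -> wp s *m a \in Phi.
Proof.
elim: s => [|i s IH] Ha; first by rewrite mul1mx.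
by rewrite wp_cons -mulmxA; apply: Phi_refl; [apply: D_in | apply: IH].
Qed.

Definition isW (x : M) := exists s, wp s = x.

Lemma isW_tr x : isW x -> isW x^T.
Proof. by case=> s <-; exists (rev s); rewrite wp_tr. Qed.

Lemma isW_mul x y : isW x -> isW y -> isW (x *m y).
Proof. by case=> s <- [t <-]; exists (s ++ t); rewrite wp_cat. Qed.

Lemma isW_orth x : isW x -> orth x.
Proof. by case=> s <-; apply: wp_orth. Qed.

Lemma isW_Phi x a : isW x -> a \in Phi -> x *m a \in Phi.
Proof. by case=> s <-; apply: wp_Phi. Qed.

Lemma perm_Phi (f g : V -> V) :
  {in Phi, forall a, f a \in Phi} -> {in Phi, forall a, g a \in Phi} ->
  {in Phi, forall a, f (g a) = a} -> {in Phi, forall a, g (f a) = a} ->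
  perm_eq (map f Phi) Phi.
Proof.
move=> Hf Hg Hfg Hgf; apply: uniq_perm; last 1 first.
- move=> x; apply/mapP/idP => [[y Hy ->]|Hx]; first exact: Hf.
  by exists (g x); [apply: Hg | rewrite Hfg].
- rewrite map_inj_in_uniq ?Phi_uniq // => x y Hx Hy E.
  by rewrite -(Hgf x Hx) E Hgf.
- exact: Phi_uniq.
Qed.

Lemma big_reindex (T : Type) (idx : T) (op : Monoid.com_law idx) (F : V -> T)
  (f g : V -> V) :
  {in Phi, forall a, f a \in Phi} -> {in Phi, forall a, g a \in Phi} ->
  {in Phi, forall a, f (g a) = a} -> {in Phi, forall a, g (f a) = a} ->
  \big[op/idx]_(a <- Phi) F (f a) = \big[op/idx]_(a <- Phi) F a.
Proof.
move=> H1 H2 H3 H4; rewrite -(big_map f xpredT).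
exact: perm_big (perm_Phi H1 H2 H3 H4).
Qed.

Lemma big_reindexW (T : Type) (idx : T) (op : Monoid.com_law idx) (F : V -> T) x :
  isW x -> \big[op/idx]_(a <- Phi) F (x *m a) = \big[op/idx]_(a <- Phi) F a.
Proof.
move=> Hx; apply: (@big_reindex T idx op F (mulmx x) (mulmx x^T)).
- by move=> a; apply: isW_Phi.
- by move=> a; apply: isW_Phi; apply: isW_tr.
- by move=> a _; rewrite mulmxA orthC ?mul1mx //; apply: isW_orth.
- by move=> a _; rewrite mulmxA isW_orth ?mul1mx.
Qed.

Lemma big_reindexN (T : Type) (idx : T) (op : Monoid.com_law idx) (F : V -> T) :
  \big[op/idx]_(a <- Phi) F (- a) = \big[op/idx]_(a <- Phi) F a.
Proof.
by apply: (@big_reindex T idx op F -%R -%R) => a; rewrite ?opprK //; apply: Phi_N.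
Qed.


Lemma big_delta (T : Type) (idx : T) (op : Monoid.com_law idx) (F : V -> T) b :
  b \in Phi -> (forall a, a != b -> F a = idx) ->
  \big[op/idx]_(a <- Phi) F a = F b.
Proof.
move=> Hb HF; rewrite (bigD1_seq b Hb Phi_uniq) /= big1 ?Monoid.mulm1 //.
Qed.

Lemma sum_delta_nat b (c : nat) : b \in Phi ->
  (\sum_(a <- Phi) ((a == b) * c) = c)%N.
Proof.
move=> Hb; rewrite (@big_delta nat 0%N addn (fun a => ((a == b) * c)%N) b Hb).
  by rewrite eqxx mul1n.
by move=> a /negbTE ->.
Qed.

Definition pb (a : V) : bool := `[< pos a >].

Lemma pbP a : reflect (pos a) (pb a). Proof. exact: asboolP. Qed.

Lemma pbN a : a \in Phi -> pb (- a) = ~~ pb a.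
Proof.
move=> Ha; apply/idP/idP.
  move/pbP=> Hn; apply/pbP => Hp; exact: pos_neg Hp Hn.
move/pbP=> Hp; apply/pbP; case: (pos_or_neg Ha) => //.
Qed.

Lemma pb_D (i : I) : pb (D i). Proof. by apply/pbP; apply: D_pos. Qed.

Lemma isW_sr i : isW (sr i). Proof. by exists [:: i]; rewrite /= mulmx1. Qed.

Definition N (x : M) : nat := \sum_(a <- Phi) (pb a && pb (- (x *m a))).

Lemma pb_sr (i : I) a : a \in Phi -> a != D i -> a != - D i -> pb (sr i *m a) = pb a.
Proof.
move=> Ha H1 H2; case: (boolP (pb a)) => [/pbP Hp|Hp].
  by apply/pbP; apply: simple_pos.
have Hn : neg a by case: (pos_or_neg Ha) => // /pbP; rewrite (negbTE Hp).
apply/negbTE; rewrite -pbN; first by apply/pbP; exact: (simple_neg Hn H2).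
by apply: isW_Phi Ha; apply: isW_sr.
Qed.

Lemma DN_neq (i : I) : D i != - D i.
Proof.
apply/eqP => E; have := pb_D i; rewrite {1}E pbN ?pb_D //; exact: D_in.
Qed.

Lemma N_step x (i : I) : isW x ->
  (N (x *m sr i) + pb (- (x *m D i)) = N x + pb (x *m D i))%N.
Proof.
move=> Hx; rewrite /N.
have -> : \sum_(a <- Phi) ((pb a && pb (- (x *m sr i *m a))) : nat) =
  \sum_(a <- Phi) ((pb (sr i *m (sr i *m a)) && pb (- (x *m (sr i *m a)))) : nat).
  by apply: eq_bigr => a _; rewrite mulmxA sr_K mul1mx mulmxA.
rewrite (big_reindexW addn (fun b => (pb (sr i *m b) && pb (- (x *m b))) : nat)
           (isW_sr i)).
rewrite -[in LHS](sum_delta_nat (pb (- (x *m D i))) (D_in i)).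
rewrite -[in RHS](sum_delta_nat (pb (x *m D i)) (Phi_N (D_in i))).
rewrite -!big_split /=; apply: eq_big_seq => a Ha.
case: (eqVneq a (D i)) => [->|H1].
  rewrite refl_self ?D_neq0 // pbN ?pb_D ?D_in //= (negbTE (DN_neq i)).
  by rewrite add0n mul1n mul0n addn0.
case: (eqVneq a (- D i)) => [->|H2].
  rewrite mulmxN refl_self ?D_neq0 // opprK pb_D pbN ?pb_D ?D_in //=.
  by rewrite mulmxN opprK.
by rewrite pb_sr // !muln0 !addn0.
Qed.


Lemma pbW x a : isW x -> a \in Phi -> pb (- (x *m a)) = ~~ pb (x *m a).
Proof. by move=> Hx Ha; rewrite pbN //; apply: isW_Phi. Qed.

Lemma N_le x i : isW x -> (N (x *m sr i) <= (N x).+1)%N.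
Proof.
move=> Hx; have := N_step i Hx; rewrite pbW ?D_in //.
by case: (pb (x *m D i)) => /= E; lia.
Qed.

Lemma exchange s (i : I) : neg (wp s *m D i) ->
  exists s', (size s' < size s)%N /\ wp s' = wp s *m sr i.
Proof.
elim: s => [|j t IH] /=.
  by rewrite mul1mx => Hn; exfalso; apply: (pos_neg (D_pos i) Hn).
rewrite -mulmxA => Hn.
have Hin : wp t *m D i \in Phi by apply: wp_Phi; apply: D_in.
case: (pos_or_neg Hin) => [Hp|Hn'].
  have E : wp t *m D i = D j by apply: simple_inv.
  exists t; split => //.
  have Hc := refl_conj (D i) (wp_orth t).
  rewrite E -/(sr j) in Hc.
  have Ho := wp_orth t; rewrite /orth in Ho.
  rewrite -/(sr j) -Hc -!mulmxA (mulmxA (wp t)^T) Ho mul1mx -/(sr i).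
  by rewrite sr_K mulmx1.
have [t' [Hs Ht']] := IH Hn'.
by exists (j :: t'); split; [ | rewrite /= Ht' mulmxA].
Qed.

Lemma N_wp s : (N (wp s) <= size s)%N.
Proof.
elim/last_ind: s => [|s i IH].
  rewrite wp_nil /N big1_seq // => a /andP [_ Ha].
  by rewrite mul1mx pbN //; case: (pb a).
rewrite wp_rcons size_rcons; apply: leq_trans (N_le i _) _.
  by exists s.
by rewrite ltnS.
Qed.

Lemma shorten s : (N (wp s) < size s)%N ->
  exists s', wp s' = wp s /\ (size s' < size s)%N.
Proof.
elim/last_ind: s => [|t i IH] //.
rewrite wp_rcons size_rcons => Hlt.
case: (ltnP (N (wp t)) (size t)) => [Hl|Hg].
  have [t' [E Hs]] := IH Hl.
  by exists (rcons t' i); rewrite wp_rcons E size_rcons.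
have EN : N (wp t) = size t by apply/eqP; rewrite eqn_leq N_wp Hg.
have Hst := N_step i (ex_intro _ t erefl).
rewrite pbW ?D_in //= in Hst; last by exists t.
case: (boolP (pb (wp t *m D i))) => Hp.
  by rewrite Hp /= in Hst; lia.
have Hn : neg (wp t *m D i).
  apply/pbP; rewrite pbW ?D_in //; by exists t.
have [s' [Hs E]] := exchange Hn.
by exists s'; split; [exact: E | apply: ltn_trans Hs _].
Qed.

Lemma length_N x : isW x -> length_is Delta x (N x).
Proof.
move=> [s0 Hs0]; split; last first.
  by move=> s <-; apply: N_wp.
have : (size s0 <= size s0)%N by [].
move: {2}(size s0) => k; elim: k s0 Hs0 => [|k IH] s Hs Hk.
  exists s; split => //; rewrite -Hs; apply/eqP.
  by rewrite eqn_leq N_wp andbT; apply: leq_trans Hk (leq0n _).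
case: (ltnP (N (wp s)) (size s)) => [Hl|Hg].
  have [s' [E Hs']] := shorten Hl.
  by apply: (IH s'); rewrite ?E // -ltnS; apply: leq_trans Hs' Hk.
exists s; split => //; rewrite -Hs; apply/eqP.
by rewrite eqn_leq N_wp Hg.
Qed.


Lemma root_conj a : pos a -> exists t (j : I), a = wp t *m D j.
Proof.
case=> Ha [c Ec].
have : (\sum_j c j <= \sum_j c j)%N by [].
move: {2}(\sum_j c j)%N => h; elim: h a Ha c Ec => [|h IH] a Ha c Ec Hh.
  exfalso; move: (Phi_neq0 Ha); rewrite Ec big1 ?eqxx // => j _.
  have : (c j <= \sum_j c j)%N by rewrite (bigD1 j) //= leq_addr.
  by rewrite leqn0 in Hh; rewrite (eqP Hh) leqn0 => /eqP ->; rewrite scale0r.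
case: (boolP [exists i : I, 0 < dot a (D i)]) => [/existsP [i Hi]|Hno].
  case: (eqVneq a (D i)) => [->|Hne].
    by exists [::], i; rewrite mul1mx.
  have Hp' : pos (sr i *m a) by apply: simple_pos => //; split => //; exists c.
  case: (Hp') => Ha' [c' Ec'].
  set k := cartan a (D i).
  have Hk : 0 < k.
    rewrite /k /cartan; apply: divr_gt0; first by rewrite mulr_gt0.
    exact: dot_gt0 (D_neq0 i).
  have E : \sum_j ((c' j)%:R : R) *: D j =
           \sum_j ((c j)%:R - (if j == i then k else 0)) *: D j.
    rewrite -Ec' (eq_bigr (fun j => (c j)%:R *: D j - (if j == i then k else 0) *: D j));
      last by move=> j _; rewrite scalerBl.
    by rewrite sumrB -Ec sum_delta /sr reflE.
  have Hsum : ((\sum_j c' j)%:R : R) = (\sum_j c j)%:R - k.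
    rewrite !natr_sum (eq_bigr _ (fun j _ => coord_uniq E j)) sumrB.
    by congr (_ - _); rewrite (bigD1 i) //= eqxx big1 ?addr0 // => j /negbTE ->.
  have Hlt : (\sum_j c' j < \sum_j c j)%N.
    by rewrite -(ltr_nat R) Hsum; lra.
  have [t [j Et]] := IH _ Ha' c' Ec' (leq_trans (leq_trans Hlt Hh) (leqnn _) : _).
  exists (i :: t), j; rewrite wp_cons -mulmxA -Et /sr reflKv //; exact: D_neq0.
exfalso; have Hle : forall i : I, dot a (D i) <= 0.
  by move=> i; rewrite leNgt; apply: contra Hno => H; apply/existsP; exists i.
have := dot_gt0 (Phi_neq0 Ha); rewrite {1}Ec dot_suml.
rewrite ltNge => /negP; apply; apply: sumr_le0 => j _.
by rewrite dotZl mulr_ge0_le0 // dotC.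
Qed.


Lemma isW_refl a : a \in Phi -> isW (refl a).
Proof.
have Hp : forall b, pos b -> isW (refl b).
  move=> b /root_conj [t [j ->]].
  rewrite -refl_conj; last exact: wp_orth.
  apply: isW_mul; [apply: isW_mul; [by exists t | exact: isW_sr] |].
  by apply: isW_tr; exists t.
move=> Ha; case: (pos_or_neg Ha) => [|Hn]; first exact: Hp.
by rewrite -reflN; apply: Hp.
Qed.

Lemma inW_isW w : in_W Phi w -> isW w.
Proof.
case=> s [Hs ->]; elim: s Hs => [|a s IH] Hs /=; first by exists [::].
apply: isW_mul; first by apply: isW_refl; apply: Hs; rewrite mem_head.
by apply: IH => b Hb; apply: Hs; rewrite in_cons Hb orbT.
Qed.


Lemma N_tr x : isW x -> N x^T = N x.
Proof.
move=> Hx; rewrite /N.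
have Ho := isW_orth Hx; have HoT := orthC Ho; rewrite /orth in Ho.
rewrite -(@big_reindex nat 0%N addn (fun a => (pb a && pb (- (x^T *m a))) : nat)
   (fun c => - (x *m c)) (fun a => - (x^T *m a))).
- apply: eq_bigr => c _; rewrite mulmxN opprK mulmxA Ho mul1mx.
  by rewrite andbC.
- by move=> a Ha; apply: Phi_N; apply: isW_Phi.
- by move=> a Ha; apply: Phi_N; apply: isW_Phi => //; apply: isW_tr.
- by move=> a _; rewrite mulmxN opprK mulmxA HoT mul1mx.
- by move=> a _; rewrite mulmxN opprK mulmxA Ho mul1mx.
Qed.

Lemma split_pos (F : V -> R) :
  \sum_(c <- Phi) F c = \sum_(c <- Phi) (pb c)%:R * (F c + F (- c)).
Proof.
rewrite (eq_big_seq (fun c => (pb c)%:R * F c + (pb (- c))%:R * F c)); last first.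
  by move=> c Hc; rewrite pbN //; case: (pb c) => /=; rewrite ?mul0r ?mul1r ?addr0 ?add0r.
rewrite big_split /= -(@big_reindexN R 0 +%R (fun c => (pb (- c))%:R * F c)).
rewrite -big_split /=; apply: eq_bigr => c _.
by rewrite opprK mulrDr.
Qed.

Lemma antisym_sum (sig : V -> V) (F : V -> R) :
  {in Phi, forall a, sig a \in Phi} -> {in Phi, forall a, sig (sig a) = a} ->
  {in Phi, forall a, F (sig a) = - F a} -> \sum_(c <- Phi) F c = 0.
Proof.
move=> H1 H2 H3.
have E := @big_reindex R 0 +%R F sig sig H1 H1 H2 H2.
rewrite (eq_big_seq (fun c => - F c)) in E; last by move=> c Hc; rewrite H3.
by rewrite sumrN in E; lra.
Qed.


Lemma dotBr (u v a : V) : dot a (u - v) = dot a u - dot a v.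
Proof. by rewrite !(dotC a) dotBl. Qed.

Variables (w : M) (g : V).
Hypothesis Hw : isW w.
Hypothesis Hmax : maxinv Phi Delta w g.

Implicit Types (c e : V).
Notation u := (w^T).
Notation sg := (refl g).

Lemma u_inv : invmx w = u. Proof. exact: orth_invmx (isW_orth Hw). Qed.
Lemma HuW : isW u. Proof. exact: isW_tr. Qed.
Lemma g_pos : pos g. Proof. by case: Hmax => -[]. Qed.
Lemma g_in : g \in Phi. Proof. exact: pos_in g_pos. Qed.
Lemma ug_neg : neg (u *m g). Proof. by case: Hmax => -[_]; rewrite u_inv. Qed.
Lemma g_neq0 : g != 0. Proof. exact: Phi_neq0 g_in. Qed.
Lemma sgK c : sg *m (sg *m c) = c. Proof. exact: reflKv g_neq0. Qed.
Lemma isW_sg : isW sg. Proof. exact: isW_refl g_in. Qed.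
Lemma sg_in c : c \in Phi -> sg *m c \in Phi. Proof. by apply: isW_Phi; apply: isW_sg. Qed.
Lemma u_in c : c \in Phi -> u *m c \in Phi. Proof. by apply: isW_Phi; apply: HuW. Qed.

Definition nI c := pb (- (u *m c)).
Definition kk c := cartan c g.

Lemma nIP c : reflect (neg (u *m c)) (nI c). Proof. exact: pbP. Qed.

Lemma nI_N c : c \in Phi -> nI (- c) = ~~ nI c.
Proof. by move=> Hc; rewrite /nI mulmxN opprK (pbW HuW Hc) negbK. Qed.

Lemma kk_s c : kk (sg *m c) = - kk c.
Proof. by rewrite /kk reflE cartanBl cartanZl cartan_self ?g_neq0 //; ring. Qed.

Lemma kk_N c : kk (- c) = - kk c.
Proof. by rewrite /kk -scaleN1r cartanZl; ring. Qed.

Lemma kk_g : kk g = 2. Proof. exact: cartan_self g_neq0. Qed.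

Lemma kk_int c : c \in Phi -> exists z : int, kk c = z%:~R.
Proof. by move=> Hc; apply: Phi_int => //; apply: g_in. Qed.

Lemma sg_g : sg *m g = - g. Proof. exact: refl_self g_neq0. Qed.

Lemma sgE c : sg *m c = c - kk c *: g. Proof. exact: reflE. Qed.

Lemma no_bigger e l : pos e -> neg (u *m e) -> e != g ->
  (forall b, b \in l -> pos b) -> e - g = \sum_(b <- l) b -> False.
Proof.
move=> He Hue Hne Hl E; case: Hmax => _; apply; exists e; split.
- by split => //; rewrite u_inv.
- exact/eqP.
- by exists l.
Qed.

Lemma sum_nseq m : \sum_(b <- nseq m g) b = g *+ m.
Proof. by elim: m => [|m IH]; rewrite ?big_nil // big_cons IH mulrS. Qed.

Lemma nI_pc c : c \in Phi -> pc (- (u *m c)) -> nI c.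
Proof. by move=> Hc H; apply/nIP; apply: pc_root_neg => //; apply: u_in. Qed.

Lemma int_ge1 (z : int) : (0 : R) < z%:~R -> exists m : nat, z%:~R = (m.+1)%:R :> R.
Proof.
rewrite ltr0z; case: z => [[|m]|m] //= _.
by exists m.
Qed.

Lemma Bpart c : pos c -> pos (sg *m c) -> c != g -> 0 < kk c ->
  ~~ nI c /\ ~~ nI (sg *m c).
Proof.
move=> Hc Hsc Hne Hk.
have [z Hz] := kk_int (pos_in Hc).
have [m Hm] : exists m : nat, kk c = (m.+1)%:R.
  by rewrite Hz in Hk *; apply: int_ge1.
have H1 : ~~ nI c.
  apply/negP => /nIP Hn; apply: (no_bigger Hc Hn Hne (l := sg *m c :: nseq m g)).
    move=> b; rewrite in_cons => /orP [/eqP -> //|].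
    by move/nseqP => [-> _]; apply: g_pos.
  rewrite big_cons sum_nseq sgE Hm scaler_nat mulrS.
  by rewrite opprD addrA subrK.
split => //; apply: contra H1 => /nIP Hn; apply: nI_pc; first exact: pos_in.
have -> : - (u *m c) = - (u *m (sg *m c)) + kk c *: (- (u *m g)).
  by rewrite sgE mulmxBr -scalemxAr scalerN opprB addrAC subrr add0r.
apply: pcD; first exact: pc_pos.
by apply: pcZ; [apply: ltW | apply: pc_pos; apply: ug_neg].
Qed.

Lemma kk_pos_C c : pos c -> neg (sg *m c) -> 0 < kk c.
Proof.
move=> Hc Hn; rewrite ltNge; apply/negP => Hk.
apply: (pos_neg _ Hn); apply: pc_root; first by apply: sg_in; apply: pos_in.
rewrite sgE -scaleNr; apply: pcD; first exact: pc_pos.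
by apply: pcZ; [rewrite oppr_ge0 | apply: pc_pos; apply: g_pos].
Qed.

Lemma cs_strict c : c \in Phi -> c != g -> c != - g ->
  dot c g ^+ 2 < dot c c * dot g g.
Proof.
move=> Hc H1 H2; set q := dot g g; set x := dot c g.
have Hq : 0 < q by apply: dot_gt0; apply: g_neq0.
set v := q *: c - x *: g.
have Hv : v != 0.
  apply/eqP => Hv0.
  have Ec : c = (x / q) *: g.
    have : q *: c = x *: g by apply/eqP; rewrite -subr_eq0 -/v Hv0.
    move=> E; rewrite mulrC -scalerA -E scalerA mulVf ?scale1r //.
    by rewrite gt_eqF.
  have := Phi_red g_in (c := x / q); rewrite -Ec => /(_ Hc) [E|E].
    by move: H1; rewrite Ec E scale1r eqxx.
  by move: H2; rewrite Ec E scaleN1r eqxx.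
have := dot_gt0 Hv.
rewrite /v !(dotBl, dotBr, dotZl, dotZr) (dotC g c) -/x -/q.
move=> H.
have H' : 0 < q * (q * dot c c - x ^+ 2) by rewrite -[_ * (_ - _)]/(_) ; nra.
rewrite pmulr_rgt0 // subr_gt0 in H'.
by rewrite mulrC.
Qed.


Lemma sub_root c : c \in Phi -> c != g -> c != - g -> 2 <= kk c -> c - g \in Phi.
Proof.
move=> Hc H1 H2 Hk.
have Hcs := cs_strict Hc H1 H2.
set p := dot c c; set q := dot g g; set x := dot c g.
have Hq : 0 < q by apply: dot_gt0; apply: g_neq0.
have Hp : 0 < p by apply: dot_gt0; apply: Phi_neq0.
have Ek : kk c * q = 2 * x by rewrite /kk /cartan -/x -/q mulfVK // gt_eqF.
have [z Hz] := Phi_int Hc g_in.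
have Ej : cartan g c * p = 2 * x by rewrite /cartan dotC -/x -/p mulfVK // gt_eqF.
have Hx : 0 < x by nra.
have Hj0 : 0 < cartan g c by nra.
have Hj2 : cartan g c < 2.
  rewrite ltNge; apply/negP => Hj.
  have E4 : (kk c * cartan g c) * (p * q) = 4 * x ^+ 2.
    by rewrite [p * q]mulrC mulrACA Ek Ej; ring.
  have H4' : 2 * 2 <= kk c * cartan g c by apply: ler_pM => //; lra.
  have H4 : 4 <= kk c * cartan g c by lra.
  have Hpq : 0 < p * q by rewrite mulr_gt0.
  have : 4 * (p * q) <= (kk c * cartan g c) * (p * q) by rewrite ler_wpM2r // ltW.
  by rewrite E4 ler_pM2l // => H; move: Hcs; rewrite ltNge H.
have Hz1 : z = 1.
  rewrite Hz in Hj0 Hj2; rewrite ltr0z in Hj0.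
  have : (z < 2)%R by rewrite -(ltr_int R).
  by move: Hj0; clear; lia.
have : refl c *m g \in Phi by apply: Phi_refl => //; apply: g_in.
rewrite reflE Hz Hz1 scale1r => /Phi_N.
by rewrite opprB.
Qed.


Lemma pos_neq_negg c : pos c -> c != - g.
Proof.
move=> Hc; apply/eqP => E; apply: (pos_neg g_pos).
by rewrite /negative -E.
Qed.

Lemma tau_pos c : neg (sg *m c) -> pos (- (sg *m c)). Proof. by []. Qed.

Lemma tau_neq c : pos c -> c != g -> - (sg *m c) != g.
Proof.
move=> Hc Hne; apply/eqP => E; move: Hne; rewrite -[c]sgK -[sg *m c]opprK E.
by rewrite mulmxN sg_g opprK eqxx.
Qed.

Lemma kk_tau c : kk (- (sg *m c)) = kk c.
Proof. by rewrite kk_N kk_s opprK. Qed.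

Lemma Cpart c : pos c -> c != g -> neg (sg *m c) -> nI c -> nI (- (sg *m c)) ->
  kk c = 1.
Proof.
move=> Hc Hne Hn HI1 HI2.
have Hk := kk_pos_C Hc Hn.
have [z Hz] := kk_int (pos_in Hc).
have Hz0 : (0 < z)%R by rewrite -(ltr0z R) -Hz.
case: (eqVneq z 1) => [Ez|Ez]; first by rewrite Hz Ez.
exfalso.
have Hk2 : 2 <= kk c.
  have : (2 <= z)%R by move: Hz0 Ez; clear; lia.
  by rewrite -(ler_int R) -Hz.
set t := - (sg *m c).
have Ht : pos t by [].
have Htne : t != g by apply: tau_neq.
have Hc1 := sub_root (pos_in Hc) Hne (pos_neq_negg Hc) Hk2.
have Ht1 : t - g \in Phi.
  by apply: sub_root => //; [apply: pos_in | apply: pos_neq_negg | rewrite kk_tau].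
have HuC : neg (u *m c) by apply/nIP.
have HuT : neg (u *m t) by apply/nIP.
case: (pos_or_neg Hc1) => [Hp1|Hn1].
  apply: (no_bigger Hc HuC Hne (l := [:: c - g])).
  - by move=> b; rewrite inE => /eqP ->.
  - by rewrite big_seq1.
case: (pos_or_neg Ht1) => [Hp2|Hn2].
  apply: (no_bigger Ht HuT Htne (l := [:: t - g])).
  - by move=> b; rewrite inE => /eqP ->.
  - by rewrite big_seq1.
have Esum : (c - g) + (t - g) = (kk c - 2) *: g.
  by rewrite /t sgE; apply/matrixP => i j; rewrite !mxE; ring.
have P1 := pc_pos Hn1; have P2 := pc_pos Hn2.
have E0 : (kk c - 2) *: g = 0.
  apply: pc_anti; first by apply: pcZ; [lra | apply: pc_pos; apply: g_pos].
  by rewrite -Esum opprD; apply: pcD.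
rewrite E0 in Esum.
have E2 : - (t - g) = c - g by apply/eqP; rewrite -subr_eq0 -opprD [X in - X]addrC Esum oppr0.
rewrite E2 in P2.
have := pc_anti P2 P1; move/eqP; rewrite subr_eq0 => /eqP Ecg.
by move: Hne; rewrite Ecg eqxx.
Qed.


Lemma Cpart2 c : pos c -> neg (sg *m c) -> nI c || nI (- (sg *m c)).
Proof.
move=> Hc Hn; have Hk := kk_pos_C Hc Hn.
set t := - (sg *m c).
have Hcin := pos_in Hc; have Htin : t \in Phi by apply: pos_in.
case: (boolP (nI c)) => //= H1; case: (boolP (nI t)) => //= H2; exfalso.
rewrite /nI (pbW HuW Hcin) negbK in H1.
rewrite /nI (pbW HuW Htin) negbK in H2.
have Es : u *m c + u *m t = kk c *: (u *m g).
  by rewrite -mulmxDr /t sgE opprB addrCA subrr addr0 scalemxAr.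
have E0 : kk c *: (u *m g) = 0.
  apply: pc_anti; first by rewrite -Es; apply: pcD; apply: pc_pos; apply/pbP.
  by rewrite -scalerN; apply: pcZ; [apply: ltW | apply: pc_pos; apply: ug_neg].
move/eqP: E0; rewrite scaler_eq0 (gt_eqF Hk) /= => /eqP E.
by move: (Phi_neq0 (u_in g_in)); rewrite E eqxx.
Qed.


Lemma wu : w *m u = 1%:M. Proof. exact: orthC (isW_orth Hw). Qed.
Lemma uw : u *m w = 1%:M. Proof. exact: (isW_orth Hw). Qed.

Lemma pb_u c : c \in Phi -> pb (u *m c) = ~~ nI c.
Proof. by move=> Hc; rewrite /nI (pbW HuW Hc) negbK. Qed.

Lemma cartan_rho : cartan (two_rho Phi Delta) (- (u *m g)) =
  \sum_(c <- Phi) (pb c)%:R * ((2 * (nI c)%:R - 1) * kk c).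
Proof.
have Ebb : dot (- (u *m g)) (- (u *m g)) = dot g g.
  by rewrite dotNl dotNr opprK orth_dot //; apply: isW_orth; apply: HuW.
have E1 : dot (two_rho Phi Delta) (- (u *m g)) =
    \sum_(c <- Phi) (pb c)%:R * ((2 * (nI c)%:R - 1) * dot c g).
  rewrite /two_rho dot_suml big_mkcond /=.
  rewrite (eq_bigr (fun c => (pb c)%:R * - dot (w *m c) g)); last first.
    move=> c _; rewrite -/(pb c); case: (pb c); rewrite ?mul1r ?mul0r //.
    by rewrite dotNr (dotC c) dotMl trmxK (dotC g).
  rewrite -(big_reindexW +%R (fun c => (pb c)%:R * - dot (w *m c) g) HuW).
  rewrite split_pos; apply: eq_big_seq => c Hc.
  rewrite !mulmxN !mulmxA wu !mul1mx dotNl opprK.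
  rewrite pb_u // -/(nI c); congr (_ * _).
  by case: (nI c) => /=; ring.
rewrite /cartan E1 Ebb mulr_sumr mulr_suml; apply: eq_bigr => c _.
rewrite /kk /cartan; ring.
Qed.


Definition hh c : R := (pb (sg *m c) && nI c)%:R +
  (pb c)%:R * ((2 * (nI c)%:R - 1) * kk c) - (pb c && nI c)%:R.
Definition fB c : R :=
  (pb c && pb (sg *m c) && (c != g))%:R * ((2 * (nI c)%:R - 1) * kk c).
Definition fC c : R :=
  (pb c && ~~ pb (sg *m c) && (c != g))%:R * ((2 * (nI c)%:R - 1) * (kk c - 1)).

Lemma pb_sgN c : c \in Phi -> pb (- (sg *m c)) = ~~ pb (sg *m c).
Proof. by move=> Hc; rewrite pbN //; apply: sg_in. Qed.

Lemma hh_point c : c \in Phi ->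
  (pb c)%:R * (hh c + hh (- c)) = (c == g)%:R + fB c + fC c.
Proof.
move=> Hc; rewrite /hh /fB /fC.
case: (boolP (pb c)) => Hp; last first.
  have -> : (c == g) = false.
    by apply/negbTE; apply: contra Hp => /eqP ->; apply/pbP; apply: g_pos.
  by rewrite /= !mul0r !addr0.
rewrite pbN // Hp mulmxN pb_sgN // nI_N //=.
case: (eqVneq c g) => [->|Hne] /=.
  rewrite sg_g pbN ?g_in // (_ : pb g = true); last by apply/pbP; apply: g_pos.
  rewrite (_ : nI g = true); last by apply/nIP; apply: ug_neg.
  by rewrite kk_g /=; ring.
by case: (pb (sg *m c)); case: (nI c) => /=; ring.
Qed.


Lemma pb_g : pb g. Proof. by apply/pbP; apply: g_pos. Qed.
Lemma pb_negg : pb (- g) = false. Proof. by rewrite pbN ?g_in ?pb_g. Qed.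

Lemma fB_anti c : c \in Phi -> fB (sg *m c) = - fB c.
Proof.
move=> Hc; rewrite /fB sgK kk_s.
case: (boolP (pb c && pb (sg *m c))) => [/andP [H1 H2]|H]; last first.
  by rewrite [pb (sg *m c) && _]andbC (negbTE H) /= !mul0r oppr0.
have Hne : c != g by apply: contraTneq H2 => ->; rewrite sg_g pb_negg.
have Hne2 : sg *m c != g.
  by apply: contraTneq H1 => E; rewrite -[c]sgK E sg_g pb_negg.
rewrite H1 H2 Hne Hne2 /=.
case: (ltrgt0P (kk c)) => Hk.
- have [A1 A2] := Bpart (elimT (pbP _) H1) (elimT (pbP _) H2) Hne Hk.
  by rewrite (negbTE A1) (negbTE A2) /=; ring.
- have Hk' : 0 < kk (sg *m c) by rewrite kk_s oppr_gt0.
  have [A1 A2] : ~~ nI (sg *m c) /\ ~~ nI (sg *m (sg *m c)).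
    by apply: Bpart => //; [apply/pbP | rewrite sgK; apply/pbP].
  rewrite sgK in A2.
  by rewrite (negbTE A1) (negbTE A2) /=; ring.
- by rewrite Hk; ring.
Qed.

Lemma fC_anti c : c \in Phi -> fC (- (sg *m c)) = - fC c.
Proof.
move=> Hc; rewrite /fC kk_tau mulmxN sgK (pbN Hc) (pb_sgN Hc) negbK.
case: (boolP (pb c && ~~ pb (sg *m c) && (c != g))) => [H|H]; last first.
  rewrite mul0r oppr0.
  case: (boolP (pb c)) => Hp; last by rewrite andbF /= mul0r.
  case: (boolP (pb (sg *m c))) => Hs; first by rewrite /= mul0r.
  move: H; rewrite Hp Hs /= negbK => /eqP ->.
  by rewrite sg_g opprK eqxx /= mul0r.
move: (H) => /andP [/andP [Hp Hs] Hne].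
have Hn : neg (sg *m c).
  by case: (pos_or_neg (sg_in Hc)) => // /pbP; rewrite (negbTE Hs).
rewrite Hp Hs tau_neq //=; last by apply/pbP.
have := Cpart2 (elimT (pbP _) Hp) Hn.
case: (boolP (nI c)) => H1; case: (boolP (nI (- (sg *m c)))) => H2 //= _.
- by rewrite (Cpart (elimT (pbP _) Hp) Hne Hn H1 H2); ring.
- by ring.
- by ring.
Qed.


Lemma tau_in c : c \in Phi -> - (sg *m c) \in Phi.
Proof. by move=> Hc; apply: Phi_N; apply: sg_in. Qed.

Lemma count_main :
  (N (u *m sg))%:R + cartan (two_rho Phi Delta) (- (u *m g)) = (N u)%:R + 1 :> R.
Proof.
rewrite cartan_rho.
have E1 : (N (u *m sg))%:R = \sum_(c <- Phi) ((pb (sg *m c) && nI c)%:R : R).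
  rewrite /N natr_sum.
  rewrite -(@big_reindex R 0 +%R (fun c => ((pb (sg *m c) && nI c)%:R : R))
              (mulmx sg) (mulmx sg) sg_in sg_in (fun c _ => sgK c) (fun c _ => sgK c)).
  by apply: eq_bigr => c _; rewrite sgK /nI mulmxA.
have E2 : (N u)%:R = \sum_(c <- Phi) ((pb c && nI c)%:R : R).
  by rewrite /N natr_sum.
have E3 : \sum_(c <- Phi) hh c = 1.
  rewrite split_pos (eq_big_seq _ hh_point) !big_split /=.
  rewrite (@big_delta R 0 +%R (fun c => (c == g)%:R) g g_in); last first.
    by move=> a /negbTE ->.
  rewrite eqxx (antisym_sum (sig := mulmx sg) sg_in (fun c _ => sgK c) fB_anti).
  rewrite (antisym_sum (sig := fun c => - (sg *m c)) tau_in _ fC_anti).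
    by rewrite !addr0.
  by move=> c _; rewrite mulmxN sgK opprK.
have E4 : \sum_(c <- Phi) hh c = \sum_(c <- Phi) ((pb (sg *m c) && nI c)%:R : R) +
   \sum_(c <- Phi) (pb c)%:R * ((2 * (nI c)%:R - 1) * kk c) -
   \sum_(c <- Phi) ((pb c && nI c)%:R : R).
  by rewrite /hh sumrB big_split.
rewrite E1 E2; lra.
Qed.


Lemma main_sec : let b := - (invmx w *m g) in
  [/\ positive Phi Delta b, refl g *m w = w *m refl b &
      exists l1 l2 : nat,
        [/\ length_is Delta w l1, length_is Delta (w *m refl b) l2 &
            (l2%:R : R) = l1%:R + 1 - cartan (two_rho Phi Delta) b]].
Proof.
rewrite u_inv => b.
have Hb : pos b by rewrite /b; apply: ug_neg.
have Hbin : b \in Phi := pos_in Hb.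
have Hou : orth u by apply: isW_orth; apply: HuW.
have Erb : refl b = u *m sg *m w.
  by rewrite /b reflN -refl_conj // trmxK.
have Ewb : w *m refl b = sg *m w.
  by rewrite Erb !mulmxA wu mul1mx.
split => //.
have HWb : isW (w *m refl b) by apply: isW_mul => //; apply: isW_refl.
exists (N w), (N (w *m refl b)); split.
- exact: length_N.
- exact: length_N.
have E1 : N (w *m refl b) = N (u *m sg).
  by rewrite -(N_tr HWb) trmx_mul refl_tr Erb -!mulmxA wu mulmx1.
have E2 : N w = N u by rewrite N_tr.
rewrite E1 E2 -count_main; ring.
Qed.

End Roots.
Unset Implicit Arguments.

Theorem lemma3p11 (R : realFieldType) (n : nat) (Phi Delta : seq 'cV[R]_n)
    (w : 'M[R]_n) (g : 'cV[R]_n) :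
  is_root_system Phi -> is_basis Phi Delta -> in_W Phi w ->
  maxinv Phi Delta w g ->
  let b := - (invmx w *m g) in
  [/\ positive Phi Delta b,
      refl g *m w = w *m refl b &
      exists l1 l2 : nat,
        [/\ length_is Delta w l1, length_is Delta (w *m refl b) l2 &
            (l2%:R : R) = l1%:R + 1 - cartan (two_rho Phi Delta) b]].
Proof.
move=> HR HB Hin Hmax.
have Hw := inW_isW HR HB Hin.
exact: (main_sec HR HB Hw Hmax).
Qed.
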